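(* For the anonymous MIS algorithm described in the context, let $\gamma\xrightarrow{t}\gamma'$ be a transition in which $t$ consists either only of Candidacy moves, or only of Withdrawal? moves all performed by nodes of a single connected candidate set of $\gamma$. If $\mathcal{X}$ is an alive connected candidate set of $\gamma$, then either $\mathcal{X}$ vanishes in this transition, or there exists an alive connected candidate set $\mathcal{X}'$ of $\gamma'$ with $\mathcal{X}'\subseteq\mathcal{X}$.
   Context: $G=(V,E)$ is a finite simple undirected graph; $N(u)$ is the open neighbourhood of $u$. A configuration assigns to each node $u$ a value $s_u\in\{\bot,\top\}$ (written $s_u^\gamma$ in configuration $\gamma$). A rule ''guard $\to$ command'' is enabled on $u$ in $\gamma$ if its guard holds there. A transition $\gamma\xrightarrow{t}\gamma'$ is given by a nonempty set $t$ of moves $(u,r)$ with $r$ enabled on $u$ in $\gamma$, at most one per node, all executed simultaneously from the values in $\gamma$; other nodes keep their values. The algorithm has the rules: (Candidacy) $s_u=\bot\wedge\forall v\in N(u),\ s_v=\bot\ \to\ s_u:=\top$. (Withdrawal?) $s_u=\top\wedge\exists v\in N(u),\ s_v=\top\ \to$ with probability $\frac12$ set $s_u:=\bot$, otherwise leave it unchanged. $\beta(\gamma)=\{u\in V: s_u^\gamma=\top\text{ and }\forall v\in N(u),\ s_v^\gamma=\bot\}$. A set $\mathcal{X}\subseteq V$ is a candidate set of $\gamma$ if every $u\in\mathcal{X}$ has $s_u^\gamma=\top$ and every $v\in N(u)$ with $s_v^\gamma=\top$ belongs to $\mathcal{X}$; it is a connected candidate set if moreover it induces a connected subgraph of $G$.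 A candidate set $\mathcal{X}$ of $\gamma$ is alive in $\gamma$ if Withdrawal? is enabled on at least one node of $\mathcal{X}$ (for connected candidate sets this is equivalent to $|\mathcal{X}|\ge 2$). In a transition $\gamma\to\gamma'$, an alive candidate set $\mathcal{X}$ of $\gamma$ vanishes if every $u\in\mathcal{X}$ satisfies $s_u^{\gamma'}=\bot$ or $u\in\beta(\gamma')$. *)

(* Defs.v *)
From mathcomp Require Import all_boot.
Set Implicit Arguments. Unset Strict Implicit. Unset Printing Implicit Defensive.

Section MIS.
Variable V : finType.
Variable e : rel V.

Definition simple_graph := symmetric e /\ irreflexive e.

Definition nbhd (u : V) : {set V} := [set v | e u v].

(* a configuration: true stands for \top, false for \bot *)
Definition config := V -> bool.

Inductive rule := Candidacy | Withdrawal.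

Definition cand_guard (g : config) (u : V) : bool :=
  ~~ g u && [forall v in nbhd u, ~~ g v].

Definition withd_guard (g : config) (u : V) : bool :=
  g u && [exists v in nbhd u, g v].

Definition enabled (g : config) (r : rule) (u : V) : bool :=
  match r with Candidacy => cand_guard g u | Withdrawal => withd_guard g u end.

(* A transition g -t-> g' where t is the set of moves {(u, r u) | u \in t};
   Withdrawal? has a probabilistic outcome: the node ends with \bot or keeps
   its value; every possible outcome is allowed. *)
Definition transition (g : config) (t : {set V}) (r : V -> rule) (g' : config) :=
  t != set0 /\
  (forall u, u \in t -> enabled g (r u) u) /\
  (forall u, u \notin t -> g' u = g u) /\
  (forall u, u \in t -> r u = Candidacy -> g' u = true) /\
  (forall u, u \in t -> r u = Withdrawal -> g' u = false \/ g' u = g u).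

Definition beta (g : config) : {set V} :=
  [set u | g u && [forall v in nbhd u, ~~ g v]].

Definition candidate_set (g : config) (X : {set V}) :=
  forall u, u \in X -> g u /\ (forall v, v \in nbhd u -> g v -> v \in X).

Definition induces_connected (X : {set V}) :=
  forall x y, x \in X -> y \in X ->
    connect [rel a b | (a \in X) && (b \in X) && e a b] x y.

Definition connected_candidate_set (g : config) (X : {set V}) :=
  candidate_set g X /\ induces_connected X.

Definition alive (g : config) (X : {set V}) :=
  exists u, u \in X /\ withd_guard g u.

Definition vanishes (g' : config) (X : {set V}) :=
  forall u, u \in X -> g' u = false \/ u \in beta g'.

End MIS.

(* Main.v *)
Require Import Defs.
From mathcomp Require Import all_boot.

Theorem mainTheorem17 (V : finType) (e : rel V) (Hg : simple_graph e)
  (g g' : config V) (t : {set V}) (r : V -> rule)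
  (Htr : transition e g t r g')
  (Ht : (forall u, u \in t -> r u = Candidacy) \/
        (exists Y : {set V}, connected_candidate_set e g Y /\ t \subset Y /\
           (forall u, u \in t -> r u = Withdrawal)))
  (X : {set V}) (HX : connected_candidate_set e g X) (HXa : alive e g X) :
  vanishes e g' X \/
  exists X' : {set V}, connected_candidate_set e g' X' /\ alive e g' X' /\
    X' \subset X.
Proof.
case: Hg => Hsym Hirr.
case: Htr => _ [Hen [Hout [Hc Hw]]].
case: HX => HXc _.
have key : forall w z, w \in X -> e w z -> g' z -> g z.
  move=> w z wX ewz g'z.
  case: (boolP (z \in t)) => zt; last by rewrite -Hout.
  case Hr: (r z).
  - have := Hen z zt; rewrite Hr /= /cand_guard => /andP [_ /forallP /(_ w)].
    rewrite inE Hsym ewz /= => /negP; by case: (HXc w wX).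
  - by case: (Hw z zt Hr) => H; rewrite H in g'z.
case: (boolP [exists u in X, g' u && (u \notin beta e g')]) => Hex; last first.
  left => u uX.
  move/existsPn: Hex => /(_ u); rewrite uX /= negb_and negbK.
  by case/orP => [/negbTE|]; [left|right].
right.
case/existsP: Hex => u /andP [uX /andP [g'u ub]].
move: ub; rewrite inE g'u /= negb_forall => /existsP [v].
rewrite inE negb_imply negbK => /andP [euv g'v].
have gv := key u v uX euv g'v.
have vX : v \in X by case: (HXc u uX) => _ H; apply: H => //; rewrite inE.
set S := [set w in X | g' w].
set R := [rel a b | (a \in S) && (b \in S) && e a b].
have RS : symmetric R.
  by move=> a b /=; rewrite [e a b]Hsym [(a \in S) && _]andbC.
set X' := [set w in X | g' w && connect R u w].
have uX' : u \in X' by rewrite inE uX g'u connect0.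
have vX' : v \in X'.
  rewrite inE vX g'v /=; apply: connect1; by rewrite /= !inE uX vX g'u g'v.
have step : forall a b, a \in X' -> R a b -> b \in X'.
  move=> a b aX' Rab; move: (aX') (Rab); rewrite /= !inE => /and3P [aX g'a cua] /andP [/andP [_ /andP [bX g'b]] eab].
  rewrite bX g'b /=; apply: connect_trans cua _; apply: connect1.
  by [].
exists X'; split; [split|split].
- move=> w; rewrite inE => /and3P [wX g'w cuw]; split => // z; rewrite inE => ewz g'z.
  have gz := key w z wX ewz g'z.
  have zX : z \in X by case: (HXc w wX) => _ H; apply: H => //; rewrite inE.
  apply: (step w); first by rewrite inE wX g'w.
  by rewrite /= !inE wX g'w zX g'z.
- move=> x y xX' yX'.
  have cxy : connect R x y.
    move: xX' yX'; rewrite !inE => /and3P [_ _ cux] /and3P [_ _ cuy].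
    apply: connect_trans cuy; by rewrite (sym_connect_sym RS).
  case/connectP: cxy => p pth ->.
  elim: p x xX' pth => [|b p IH] a aX' /=; first by rewrite connect0.
  case/andP => Rab pth.
  have bX' := step a b aX' Rab.
  apply: connect_trans (IH b bX' pth).
  apply: connect1; move: Rab => /= /andP [_ eab]; by rewrite aX' bX' eab.
- exists u; split => //; rewrite /withd_guard g'u /=.
  by apply/existsP; exists v; rewrite inE euv g'v.
- by apply/subsetP => w; rewrite inE => /andP [].
Qed.
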